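(* Let $i,m\in[1,M]$ be black vertices and $j,n\in[1,N]$ white vertices, and define $a$ by $\#\{i,j,m,n\}=4-a$. Let $(k,\ell),(p,q)$ be two further black–white pairs and define $b$ by $\#\{i,j,m,n,k,\ell,p,q\}=8-b$. Then $$\mathbb E[A_{ij}A_{mn}]=O\Big(\frac{d_b}N\Big)^{2-\lfloor a/2\rfloor},\qquad \mathbb E[A_{ij}A_{mn}A_{k\ell}A_{pq}]=O\Big(\frac{d_b}N\Big)^{4-\lfloor b/2\rfloor}.$$
   Context: Let $M\ge N$, $\alpha=M/N\ge1$ fixed, $N\to\infty$; $d_b,d_w$ positive integers with $Md_b=Nd_w$, $N^{c_0}\le d_b\le N^{2/3-c_0}$ for a fixed $c_0>0$. $A\in\{0,1\}^{M\times N}$ is the biadjacency matrix of a bipartite graph drawn uniformly at random from the set of bipartite graphs with $M$ black vertices of degree $d_b$ and $N$ white vertices of degree $d_w$; $A_{xy}=1$ iff black vertex $x$ is adjacent to white vertex $y$. Black and white vertices are distinct labels, so $\#\{\cdot\}$ counts distinct vertices. The expectation is under the uniform measure and implicit constants do not depend on $N$ or the indices. *)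

(* Defs.v *)
From mathcomp Require Import all_boot all_order all_algebra.
From mathcomp Require Import all_classical all_reals all_analysis.
Set Implicit Arguments. Unset Strict Implicit. Unset Printing Implicit Defensive.
Import Order.TTheory GRing.Theory Num.Theory.
Local Open Scope ring_scope.

(* A : 'M[bool]_(M,N) is the biadjacency matrix of a bipartite graph with
   M black vertices (rows) and N white vertices (columns); A x y = true iff
   black x is adjacent to white y. *)
Definition biregular (M N db dw : nat) (A : 'M[bool]_(M, N)) : bool :=
  [forall x : 'I_M, #|[set y : 'I_N | A x y]| == db] &&
  [forall y : 'I_N, #|[set x : 'I_M | A x y]| == dw].

Definition biregSet (M N db dw : nat) : {set 'M[bool]_(M, N)} :=
  [set A | biregular db dw A].

Definition Ebireg {R : realType} (M N db dw : nat) (f : 'M[bool]_(M, N) -> R) : R :=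
  (\sum_(A in biregSet M N db dw) f A) / (#|biregSet M N db dw|)%:R.

Definition ent {R : realType} (M N : nat) (A : 'M[bool]_(M, N)) (x : 'I_M) (y : 'I_N) : R :=
  (A x y : nat)%:R.

(* Main.v *)
Require Import Defs.
From mathcomp Require Import all_boot all_order all_algebra.
From mathcomp Require Import all_classical all_reals all_analysis.
Import Order.TTheory GRing.Theory Num.Theory.
Local Open Scope ring_scope.
From mathcomp Require Import fingroup perm zify ring lra.
Set Implicit Arguments. Unset Strict Implicit. Unset Printing Implicit Defensive.

Definition relab (M N : nat) (s : {perm 'I_M}) (p : {perm 'I_N}) (A : 'M[bool]_(M,N)) : 'M[bool]_(M,N) :=
  \matrix_(x, y) A (s x) (p y).

Lemma card_perm_pre (T : finType) (p : {perm T}) (P : pred T) :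
  #|[set y | P (p y)]| = #|[set y | P y]|.
Proof.
have -> : [set y | P (p y)] = (p^-1)%g @: [set y | P y].
  apply/setP=> y; rewrite inE; apply/idP/imsetP.
    by move=> Py; exists (p y); rewrite ?inE // permK.
  by move=> [z]; rewrite inE => Pz ->; rewrite permKV.
by rewrite card_imset //; apply: perm_inj.
Qed.

Lemma biregular_relab1 M N db dw (s : {perm 'I_M}) (p : {perm 'I_N}) (A : 'M[bool]_(M,N)) :
  biregular db dw A -> biregular db dw (relab s p A).
Proof.
case/andP=> /forallP hr /forallP hc; apply/andP; split; apply/forallP.
  move=> x; rewrite -(eqP (hr (s x))).
  under eq_finset => y do rewrite mxE.
  by rewrite (card_perm_pre p (fun y => A (s x) y)).
move=> y; rewrite -(eqP (hc (p y))).
under eq_finset => x do rewrite mxE.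
by rewrite (card_perm_pre s (fun x => A x (p y))).
Qed.

Lemma relabK M N (s : {perm 'I_M}) (p : {perm 'I_N}) (A : 'M[bool]_(M,N)) : relab (s^-1)%g (p^-1)%g (relab s p A) = A.
Proof. by apply/matrixP=> x y; rewrite !mxE !permKV. Qed.

Lemma biregular_relab M N db dw (s : {perm 'I_M}) (p : {perm 'I_N}) (A : 'M[bool]_(M,N)) :
  biregular db dw (relab s p A) = biregular db dw A.
Proof.
apply/idP/idP; last exact: biregular_relab1.
by move=> /(biregular_relab1 (s^-1)%g (p^-1)%g); rewrite relabK.
Qed.

Lemma sum_relab (R : realType) M N db dw (s : {perm 'I_M}) (p : {perm 'I_N}) (f : 'M[bool]_(M,N) -> R) :
  \sum_(A in biregSet M N db dw) f (relab s p A) = \sum_(A in biregSet M N db dw) f A.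
Proof.
have inj : injective (relab s p).
  by move=> A B /(congr1 (relab (s^-1)%g (p^-1)%g)); rewrite !relabK.
rewrite [RHS](reindex_inj inj) /=; apply: eq_bigl => A.
by rewrite !inE biregular_relab.
Qed.

Definition Yp (R : realType) M N (es : seq ('I_M * 'I_N)) (A : 'M[bool]_(M,N)) : R :=
  \prod_(e <- es) ent A e.1 e.2.
Definition Bs M N (es : seq ('I_M * 'I_N)) : {set 'I_M} := foldr (fun e S => e.1 |: S) finset.set0 es.
Definition Ws M N (es : seq ('I_M * 'I_N)) : {set 'I_N} := foldr (fun e S => e.2 |: S) finset.set0 es.

Lemma in_Bs M N (es : seq ('I_M * 'I_N)) e : e \in es -> (e.1 \in Bs es) && (e.2 \in Ws es).
Proof.
elim: es => //= e' es IH; rewrite in_cons => /orP [/eqP <-|/IH /andP [h1 h2]].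
  by rewrite !setU11.
by rewrite !in_setU1 h1 h2 !orbT.
Qed.

Lemma ent_ge0 (R : realType) M N (A : 'M[bool]_(M,N)) x y : 0 <= ent A x y :> R.
Proof. by rewrite /ent ler0n. Qed.
Lemma ent_le1 (R : realType) M N (A : 'M[bool]_(M,N)) x y : ent A x y <= 1 :> R.
Proof. by rewrite /ent; case: (A x y). Qed.
Lemma Yp_ge0 (R : realType) M N es (A : 'M[bool]_(M,N)) : 0 <= Yp R es A.
Proof. by apply: prodr_ge0 => e _; apply: ent_ge0. Qed.

Lemma col_sum (R : realType) M N db dw (A : 'M[bool]_(M,N)) y :
  biregular db dw A -> \sum_x ent A x y = dw%:R :> R.
Proof.
case/andP=> _ /forallP /(_ y) /eqP <-.
rewrite /ent -natr_sum -sum1dep_card.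
by congr (_%:R); rewrite [RHS]big_mkcond; apply: eq_bigr => x _; case: (A x y).
Qed.
Lemma row_sum (R : realType) M N db dw (A : 'M[bool]_(M,N)) x :
  biregular db dw A -> \sum_y ent A x y = db%:R :> R.
Proof.
case/andP=> /forallP /(_ x) /eqP <- _.
rewrite /ent -natr_sum -sum1dep_card.
by congr (_%:R); rewrite [RHS]big_mkcond; apply: eq_bigr => y _; case: (A x y).
Qed.

Lemma sub_sum_le (R : realType) (T : finType) (C : {set T}) (f : T -> R) :
  (forall x, 0 <= f x) -> \sum_(x in C) f x <= \sum_x f x.
Proof.
move=> f0; rewrite [X in _ <= X](bigID (fun x => x \in C)) /= lerDl.
by apply: sumr_ge0.
Qed.

Lemma step_black (R : realType) M N db dw (es : seq ('I_M * 'I_N)) x y :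
  x \notin Bs es ->
  #|~: Bs es|%:R * (\sum_(A in biregSet M N db dw) ent A x y * Yp R es A)
  <= dw%:R * \sum_(A in biregSet M N db dw) Yp R es A.
Proof.
move=> xB.
have eq1 : forall x', x' \in ~: Bs es ->
   \sum_(A in biregSet M N db dw) ent A x y * Yp R es A
   = \sum_(A in biregSet M N db dw) ent A x' y * Yp R es A.
  move=> x'; rewrite inE => x'B.
  rewrite -(sum_relab db dw (tperm x x') 1%g (fun A => ent A x' y * Yp R es A)).
  apply: eq_bigr => A _; congr (_ * _).
    by rewrite /ent mxE tpermR perm1.
  rewrite /Yp big_seq [RHS]big_seq; apply: eq_bigr => e /in_Bs /andP [he _].
  rewrite /ent mxE perm1 tpermD //.
    by apply: contraNneq xB => ->.
  by apply: contraNneq x'B => ->.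
rewrite mulr_natl -sumr_const (eq_bigr _ eq1) exchange_big /= mulr_sumr.
apply: ler_sum => A AS.
rewrite -mulr_suml mulrC [X in _ <= X]mulrC ler_wpM2l ?Yp_ge0 //.
rewrite -(col_sum R y (_ : biregular db dw A)); last by move: AS; rewrite inE.
by apply: sub_sum_le => z; apply: ent_ge0.
Qed.

Lemma step_white (R : realType) M N db dw (es : seq ('I_M * 'I_N)) x y :
  y \notin Ws es ->
  #|~: Ws es|%:R * (\sum_(A in biregSet M N db dw) ent A x y * Yp R es A)
  <= db%:R * \sum_(A in biregSet M N db dw) Yp R es A.
Proof.
move=> yW.
have eq1 : forall y', y' \in ~: Ws es ->
   \sum_(A in biregSet M N db dw) ent A x y * Yp R es A
   = \sum_(A in biregSet M N db dw) ent A x y' * Yp R es A.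
  move=> y'; rewrite inE => y'W.
  rewrite -(sum_relab db dw 1%g (tperm y y') (fun A => ent A x y' * Yp R es A)).
  apply: eq_bigr => A _; congr (_ * _).
    by rewrite /ent mxE tpermR perm1.
  rewrite /Yp big_seq [RHS]big_seq; apply: eq_bigr => e /in_Bs /andP [_ he].
  rewrite /ent mxE perm1 tpermD //.
    by apply: contraNneq yW => ->.
  by apply: contraNneq y'W => ->.
rewrite mulr_natl -sumr_const (eq_bigr _ eq1) exchange_big /= mulr_sumr.
apply: ler_sum => A AS.
rewrite -mulr_suml mulrC [X in _ <= X]mulrC ler_wpM2l ?Yp_ge0 //.
rewrite -(row_sum R x (_ : biregular db dw A)); last by move: AS; rewrite inE.
by apply: sub_sum_le => z; apply: ent_ge0.
Qed.

Fixpoint cnt M N (es : seq ('I_M * 'I_N)) : nat :=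
  if es is e :: es' then (cnt es' + ((e.1 \notin Bs es') || (e.2 \notin Ws es')))%N else 0%N.

Lemma cnt_le M N (es : seq ('I_M * 'I_N)) : (cnt es <= size es)%N.
Proof. by elim: es => //= e es IH; case: (_ || _); rewrite /=; lia. Qed.

Lemma cardB_le M N (es : seq ('I_M * 'I_N)) : (#|Bs es| <= size es)%N /\ (#|Ws es| <= size es)%N.
Proof.
elim: es => [|e es [IH1 IH2]] /=; first by rewrite !cards0.
rewrite !cardsU1; split.
  by case: (_ \notin _); rewrite /= ?add1n ?add0n // (leq_trans IH1).
by case: (_ \notin _); rewrite /= ?add1n ?add0n // (leq_trans IH2).
Qed.

Lemma card_cnt M N (es : seq ('I_M * 'I_N)) : (#|Bs es| + #|Ws es| <= 2 * cnt es)%N.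
Proof.
elim: es => [|e es IH] /=; first by rewrite !cards0.
rewrite !cardsU1.
case: (e.1 \in Bs es); case: (e.2 \in Ws es); rewrite /=; move: IH; set u := #|Bs es|; set v := #|Ws es|; set w := cnt es; clearbody u v w; rewrite /=; lia.
Qed.

Lemma aux_div (R : realType) (n Mr Nr dbr dwr S' T B : R) :
  0 < n -> 0 < Nr -> Mr <= 4 * n -> Nr * dwr = Mr * dbr -> 0 <= dbr -> 0 <= dwr ->
  0 <= S' -> n * S' <= dwr * T -> T <= B -> 0 <= B -> S' <= 4 * (dbr / Nr) * B.
Proof.
move=> n0 N0 Mn eq db0 dw0 S0 h1 h2 B0.
have h3 : n * S' <= dwr * B by apply: (le_trans h1); rewrite ler_wpM2l.
have h4 : Nr * (n * S') <= Mr * dbr * B by rewrite -eq -mulrA ler_wpM2l // ltW.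
have h5 : Mr * dbr * B <= 4 * n * dbr * B.
  by rewrite ler_wpM2r // ler_wpM2r.
have h6 : n * (Nr * S') <= n * (4 * dbr * B).
  by rewrite mulrCA (le_trans h4) // (le_trans h5) // -!mulrA mulrCA.
rewrite ler_pM2l // in h6.
have -> : 4 * (dbr / Nr) * B = (4 * dbr * B) / Nr by rewrite mulrA mulrAC.
by rewrite ler_pdivlMr // mulrC.
Qed.

Lemma Yp_cons (R : realType) M N e (es : seq ('I_M * 'I_N)) A :
  Yp R (e :: es) A = ent A e.1 e.2 * Yp R es A.
Proof. by rewrite /Yp big_cons. Qed.

Lemma main_ind (R : realType) M N db dw (es : seq ('I_M * 'I_N)) :
  (4 <= M)%N -> (4 <= N)%N -> (M * db = N * dw)%N -> (size es <= 4)%N ->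
  \sum_(A in biregSet M N db dw) Yp R es A
    <= (4 * (db%:R / N%:R)) ^+ cnt es * #|biregSet M N db dw|%:R.
Proof.
move=> M4 N4 eqMN; elim: es => [|e es IH] hs.
  under eq_bigr => A _ do rewrite /Yp big_nil.
  by rewrite sumr_const expr0 mul1r.
have hs' : (size es <= 3)%N by move: hs => /=; lia.
have {IH} IH := IH (leq_trans hs' (leqnSn 3)).
have [cB cW] := cardB_le es.
under eq_bigr => A _ do rewrite Yp_cons.
have x0 : (0 : R) <= 4 * (db%:R / N%:R) by rewrite mulr_ge0 // divr_ge0.
have B0 : (0 : R) <= (4 * (db%:R / N%:R)) ^+ cnt es * #|biregSet M N db dw|%:R.
  by rewrite mulr_ge0 // exprn_ge0.
have S0 : (0 : R) <= \sum_(A in biregSet M N db dw) ent A e.1 e.2 * Yp R es A.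
  by apply: sumr_ge0 => A _; rewrite mulr_ge0 ?ent_ge0 ?Yp_ge0.
have eqR : (N%:R : R) * dw%:R = M%:R * db%:R by rewrite -!natrM eqMN.
rewrite /=.
case h1: (e.1 \in Bs es) => /=; last first.
  rewrite addn1 exprS -mulrA.
  have := step_black R db dw e.2 (negbT h1).
  move=> st; apply: (aux_div _ _ _ eqR _ _ S0 st IH B0) => //.
  - have : (#|Bs es| + #|~: Bs es| = M)%N by rewrite cardsC card_ord.
    move=> h; rewrite ltr0n; lia.
  - by rewrite ltr0n; lia.
  - have : (#|Bs es| + #|~: Bs es| = M)%N by rewrite cardsC card_ord.
    move=> h; rewrite -natrM ler_nat; lia.
case h2: (e.2 \in Ws es) => /=; last first.
  rewrite addn1 exprS -mulrA.
  have := step_white R db dw e.1 (negbT h2).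
  have eqR' : (N%:R : R) * db%:R = N%:R * db%:R by [].
  move=> st; apply: (aux_div _ _ _ eqR' _ _ S0 st IH B0) => //.
  - have : (#|Ws es| + #|~: Ws es| = N)%N by rewrite cardsC card_ord.
    move=> h; rewrite ltr0n; lia.
  - by rewrite ltr0n; lia.
  - have : (#|Ws es| + #|~: Ws es| = N)%N by rewrite cardsC card_ord.
    move=> h; rewrite -natrM ler_nat; lia.
rewrite addn0; apply: le_trans IH; apply: ler_sum => A _.
by rewrite ler_piMl ?Yp_ge0 ?ent_le1.
Qed.

Lemma setsB M N (i m : 'I_M) (j n : 'I_N) :
  [set i; m] = Bs [:: (i, j); (m, n)].
Proof. by apply/setP => z; rewrite /= !inE orbF. Qed.
Lemma setsW M N (i m : 'I_M) (j n : 'I_N) :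
  [set j; n] = Ws [:: (i, j); (m, n)].
Proof. by apply/setP => z; rewrite /= !inE orbF. Qed.
Lemma setsB4 M N (i m k p : 'I_M) (j n l q : 'I_N) :
  [set i; m; k; p] = Bs [:: (i, j); (m, n); (k, l); (p, q)].
Proof. by apply/setP => z; rewrite /= !inE orbF !orbA. Qed.
Lemma setsW4 M N (i m k p : 'I_M) (j n l q : 'I_N) :
  [set j; n; l; q] = Ws [:: (i, j); (m, n); (k, l); (p, q)].
Proof. by apply/setP => z; rewrite /= !inE orbF !orbA. Qed.

Lemma finish (R : realType) M N db dw (es : seq ('I_M * 'I_N)) k :
  (4 <= M)%N -> (4 <= N)%N -> (M * db = N * dw)%N -> (size es <= 4)%N ->
  (k <= cnt es)%N ->
  Ebireg db dw (Yp R es) <= 256 * (db%:R / N%:R) ^+ k.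
Proof.
move=> M4 N4 eqMN hs hk.
have x0 : (0 : R) <= db%:R / N%:R by rewrite divr_ge0.
rewrite /Ebireg.
have [S0|SP] := eqVneq #|biregSet M N db dw| 0%N.
  by rewrite S0 invr0 mulr0 mulr_ge0 // exprn_ge0.
have [A0 A0S] : exists A0, A0 \in biregSet M N db dw.
  by apply/card_gt0P; rewrite lt0n.
have dbN : (db <= N)%N.
  move: A0S; rewrite inE => /andP [/forallP /(_ (Ordinal (leq_trans (isT : (1 <= 4)%N) M4))) /eqP <- _].
  by rewrite -[X in (_ <= X)%N]card_ord max_card.
have x1 : db%:R / N%:R <= (1 : R).
  by rewrite ler_pdivrMr ?ltr0n ?mul1r ?ler_nat //; lia.
have Spos : (0 : R) < #|biregSet M N db dw|%:R by rewrite ltr0n lt0n.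
rewrite ler_pdivrMr //.
apply: (le_trans (@main_ind R M N db dw es M4 N4 eqMN hs)).
apply: ler_wpM2r; first exact: ltW.
rewrite exprMn.
have c4 : (cnt es <= 4)%N by apply: leq_trans (cnt_le es) hs.
apply: ler_pM; rewrite ?exprn_ge0 //.
  have -> : (256 : R) = 4 ^+ 4 by rewrite -natrX.
  by rewrite ler_eXn2l // ltr1n.
by apply: ler_wiXn2l.
Qed.

Theorem mainTheorem10 (R : realType) (alpha c0 : R) :
  1 <= alpha -> 0 < c0 ->
  exists C : R, exists N0 : nat,
  forall (M N db dw : nat),
    (N0 <= N)%N ->
    M%:R = alpha * N%:R ->
    (M * db = N * dw)%N ->
    (0 < db)%N -> (0 < dw)%N ->
    N%:R `^ c0 <= db%:R ->
    db%:R <= N%:R `^ (2 / 3 - c0) ->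
    (forall (i m : 'I_M) (j n : 'I_N),
       let a := (4 - (#|[set i; m]| + #|[set j; n]|))%N in
       @Ebireg R M N db dw (fun A => ent A i j * ent A m n)
         <= C * (db%:R / N%:R) ^+ (2 - a./2)) /\
    (forall (i m k p : 'I_M) (j n l q : 'I_N),
       let b := (8 - (#|[set i; m; k; p]| + #|[set j; n; l; q]|))%N in
       @Ebireg R M N db dw (fun A => ent A i j * ent A m n * ent A k l * ent A p q)
         <= C * (db%:R / N%:R) ^+ (4 - b./2)).
Proof.
move=> alpha1 _; exists 256, 4%N => M N db dw N4 eqM eqMN _ _ _ _.
have NM : (N <= M)%N.
  by rewrite -(ler_nat R) eqM ler_peMl // ler0n.
have M4 : (4 <= M)%N by apply: leq_trans NM.
split.
  move=> i m j n; rewrite /=.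
  have -> : Ebireg db dw (fun A => ent A i j * ent A m n)
      = Ebireg db dw (Yp R [:: (i, j); (m, n)]).
    by rewrite /Ebireg; congr (_ / _); apply: eq_bigr => A _; rewrite /Yp !big_cons big_nil mulr1.
  apply: finish => //.
  rewrite (setsB i m j n) (setsW i m j n).
  have := card_cnt [:: (i, j); (m, n)]; have := cnt_le [:: (i, j); (m, n)].
  rewrite -divn2.
  set u := #|Bs _|; set v := #|Ws _|; set w := cnt _; clearbody u v w; rewrite /=; lia.
move=> i m k p j n l q; rewrite /=.
have -> : Ebireg db dw (fun A => ent A i j * ent A m n * ent A k l * ent A p q)
    = Ebireg db dw (Yp R [:: (i, j); (m, n); (k, l); (p, q)]).
  by rewrite /Ebireg; congr (_ / _); apply: eq_bigr => A _; rewrite /Yp !big_cons big_nil mulr1 !mulrA.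
apply: finish => //.
rewrite (setsB4 i m k p j n l q) (setsW4 i m k p j n l q).
have := card_cnt [:: (i, j); (m, n); (k, l); (p, q)].
have := cnt_le [:: (i, j); (m, n); (k, l); (p, q)].
rewrite -divn2.
set u := #|Bs _|; set v := #|Ws _|; set w := cnt _; clearbody u v w; rewrite /=; lia.
Qed.
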